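(* Let $m\ge 3$, $n\ge 2$ be integers with $m\ne 2n-1$. Then the squid graph $\mathrm{Sq}(m;1^n)$ is not Schur positive.
   Context: The squid graph $\mathrm{Sq}(m;1^n)$ is obtained from the cycle $C_m$ on $m$ vertices by attaching $n$ new pendant vertices (leaves), each joined by an edge to one common vertex $v_0$ of the cycle. For a finite simple graph $G$, the chromatic symmetric function is $X_G=\sum_{\kappa}\prod_{v\in V(G)}x_{\kappa(v)}$ over proper colorings $\kappa:V(G)\to\{1,2,\dots\}$; $G$ is Schur positive if all coefficients of $X_G$ in the Schur basis are nonnegative. *)

(* Defs.v *)
From HB Require Import structures.
From mathcomp Require Import all_boot all_order all_algebra.
From mathcomp Require Import mpoly.
Set Implicit Arguments. Unset Strict Implicit. Unset Printing Implicit Defensive.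
Import Order.TTheory GRing.Theory Num.Theory.
Local Open Scope ring_scope.

Definition simple_graph (V : finType) (e : rel V) : Prop :=
  (forall u v, e u v = e v u) /\ (forall u, e u u = false).

Definition proper_coloring (V : finType) (e : rel V) (N : nat)
  (k : {ffun V -> 'I_N}) : bool :=
  [forall u, forall v, e u v ==> (k u != k v)].

Definition chrom_sym (V : finType) (e : rel V) (N : nat) : {mpoly rat[N]} :=
  \sum_(k : {ffun V -> 'I_N} | proper_coloring e k) \prod_(v : V) 'X_(k v).

(* Partitions of d, encoded as nonincreasing row-length functions
   l : 'I_d -> 'I_d.+1 (row i has length l i, trailing zero rows) with total size d. *)
Definition is_partition (d : nat) (l : {ffun 'I_d -> 'I_d.+1}) : bool :=
  [forall i : 'I_d, forall j : 'I_d, (i <= j)%N ==> (l j <= l i)%N]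
  && ((\sum_(i : 'I_d) (l i : nat))%N == d).

Definition cell (d : nat) (l : {ffun 'I_d -> 'I_d.+1}) (c : 'I_d * 'I_d) : bool :=
  (c.2 < l c.1)%N.

Definition ent (d N : nat) (T : {ffun 'I_d * 'I_d -> option 'I_N}) (c : 'I_d * 'I_d)
  : nat := if T c is Some k then (k : nat) else 0%N.

Definition is_ssyt (d N : nat) (l : {ffun 'I_d -> 'I_d.+1})
  (T : {ffun 'I_d * 'I_d -> option 'I_N}) : bool :=
  [forall c : 'I_d * 'I_d, cell l c == (T c != None)]
  && [forall i : 'I_d, forall j : 'I_d, forall j' : 'I_d,
        [&& cell l (i, j), cell l (i, j') & (j <= j')%N] ==>
        (ent T (i, j) <= ent T (i, j'))%N]
  && [forall i : 'I_d, forall i' : 'I_d, forall j : 'I_d,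
        [&& cell l (i, j), cell l (i', j) & (i < i')%N] ==>
        (ent T (i, j) < ent T (i', j))%N].

Definition schur (d N : nat) (l : {ffun 'I_d -> 'I_d.+1}) : {mpoly rat[N]} :=
  \sum_(T : {ffun 'I_d * 'I_d -> option 'I_N} | is_ssyt l T)
     \prod_(c : 'I_d * 'I_d) (if T c is Some k then 'X_k else 1).

(* X_G is homogeneous of degree d = |V|; the
   specialisation Lambda^d -> Lambda^d_N to N = d variables is an isomorphism
   sending s_l to s_l(x_0..x_(d-1)) for every partition l of d, so X_G is Schur
   positive iff its d-variable specialisation is a nonnegative combination of the
   Schur polynomials s_l, l |- d. *)
Definition schur_positive (V : finType) (e : rel V) : Prop :=
  exists c : {ffun {ffun 'I_#|V| -> 'I_#|V|.+1} -> rat},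
    (forall l, is_partition l -> 0 <= c l) /\
    chrom_sym e #|V| = \sum_(l | is_partition l) c l *: schur #|V| l.

(* The squid graph Sq(m;1^n) on vertex set 'I_(m+n): vertices 0..m-1 form the
   cycle C_m (i ~ i+1 mod m), vertex 0 is v_0, and vertices m..m+n-1 are the
   n leaves, each adjacent to v_0 only. *)
Definition squid_edge (m n : nat) : rel 'I_(m + n) :=
  fun u v =>
    [|| [&& (u < m)%N, (v < m)%N, (u != v :> nat) &
          ((v == (u.+1 %% m)%N :> nat) || (u == (v.+1 %% m)%N :> nat))],
        ((m <= u)%N && (v == 0%N :> nat)) |
        ((m <= v)%N && (u == 0%N :> nat))].

(* Main.v *)
Require Import Defs.
From mathcomp Require Import all_boot all_order all_algebra.
From mathcomp Require Import mpoly.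
From mathcomp Require Import zify.
Set Implicit Arguments. Unset Strict Implicit. Unset Printing Implicit Defensive.
Import Order.TTheory GRing.Theory Num.Theory.

Section AlgPart.
Local Open Scope ring_scope.

Lemma prodX_mnm N (I : finType) (F : I -> 'X_{1..N}) :
  \prod_(i : I) ('X_[F i] : {mpoly rat[N]}) = 'X_[(\sum_(i : I) F i)%MM].
Proof.
by rewrite (big_morph (fun m => ('X_[m] : {mpoly rat[N]})) (@mpolyXD _ _) (@mpolyX0 _ _)).
Qed.

Lemma sum_bool_card (I : finType) (P Q : pred I) :
  (\sum_(i | P i) (Q i : nat))%N = #|[set i | P i & Q i]|.
Proof.
rewrite -sum1_card [RHS](eq_bigl (fun i => P i && Q i)); last by move=> i; rewrite inE.
by rewrite big_mkcondr /=; apply: eq_bigr => i _; case: (Q i).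
Qed.

Lemma coef_sumX N (I : finType) (P : pred I) (F : I -> 'X_{1..N}) m :
  (\sum_(i | P i) ('X_[F i] : {mpoly rat[N]}))@_m = #|[set i | P i & F i == m]|%:R.
Proof.
rewrite raddf_sum /=.
under eq_bigr do rewrite mcoeffX.
by rewrite -natr_sum sum_bool_card.
Qed.

Definition mof N (f : nat -> nat) : 'X_{1..N} := [multinom f i | i < N].

Lemma mof_eq N (I : finType) (G : I -> 'X_{1..N}) (cnt : 'I_N -> nat) f :
  (forall i, (\sum_(x : I) G x)%MM i = cnt i) ->
  ((\sum_(x : I) G x)%MM == mof N f) = [forall i : 'I_N, cnt i == f i].
Proof.
move=> h; apply/eqP/forallP.
  by move=> e i; rewrite -h e /mof mnmE.
by move=> H; apply/mnmP => i; rewrite h /mof mnmE; apply/eqP.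
Qed.

Lemma coef_chrom (V : finType) (e : rel V) f :
  (chrom_sym e #|V|)@_(mof #|V| f) =
  #|[set k : {ffun V -> 'I_#|V|} | proper_coloring e k &
       [forall i : 'I_#|V|, #|[set v | k v == i]| == f i]]|%:R.
Proof.
rewrite /chrom_sym.
under eq_bigr do rewrite (prodX_mnm (fun v => U_(_ v)%MM)).
rewrite coef_sumX; congr (_%:R); apply: eq_card => k; rewrite !inE.
congr (_ && _); apply: mof_eq => i.
rewrite mnm_sumE; under eq_bigr do rewrite mnm1E.
by rewrite sum_bool_card; apply: eq_card => v; rewrite !inE.
Qed.

Lemma coef_schur d N (l : {ffun 'I_d -> 'I_d.+1}) f :
  (schur N l)@_(mof N f) =
  #|[set T : {ffun 'I_d * 'I_d -> option 'I_N} | is_ssyt l T &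
       [forall i : 'I_N, #|[set c | T c == Some i]| == f i]]|%:R.
Proof.
rewrite /schur.
have eX : forall T : {ffun 'I_d * 'I_d -> option 'I_N},
   \prod_(c : 'I_d * 'I_d) (if T c is Some k then 'X_k else 1 : {mpoly rat[N]}) =
   'X_[(\sum_(c : 'I_d * 'I_d) (if T c is Some k then U_(k) else 0))%MM].
  move=> T; rewrite -prodX_mnm; apply: eq_bigr => c _.
  by case: (T c) => [k|] //; rewrite mpolyX0.
under eq_bigr do rewrite eX.
rewrite coef_sumX; congr (_%:R); apply: eq_card => T; rewrite !inE.
congr (_ && _); apply: mof_eq => i.
rewrite mnm_sumE.
have -> : #|[set c | T c == Some i]| = (\sum_(c : 'I_d * 'I_d) ((T c == Some i) : nat))%N.
  by rewrite sum_bool_card; apply: eq_card => c; rewrite !inE.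
apply: eq_bigr => c _; case: (T c) => [k|] //=.
by rewrite mnm1E (inj_eq Some_inj).
by rewrite mnm0E.
Qed.

End AlgPart.

Lemma card_ltset d x : (x <= d)%N -> #|[set j : 'I_d | (j < x)%N]| = x.
Proof.
move=> hx.
have -> : [set j : 'I_d | (j < x)%N] = [set widen_ord hx j | j : 'I_x].
  apply/setP => j; rewrite inE; apply/idP/imsetP.
    by move=> hj; exists (Ordinal hj) => //; apply: val_inj.
  by case=> j' _ ->; rewrite /= ltn_ord.
by rewrite card_imset ?card_ord //; by move=> p q /(congr1 val) /= /val_inj.
Qed.

Section Ssyt.
Variables (d N : nat) (l : {ffun 'I_d -> 'I_d.+1}) (T : {ffun 'I_d * 'I_d -> option 'I_N}).

Lemma ssytP : is_ssyt l T ->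
  [/\ forall c, cell l c = (T c != None),
      forall i j j' : 'I_d, (j < l i)%N -> (j' < l i)%N -> (j <= j')%N -> (ent T (i, j) <= ent T (i, j'))%N &
      forall i i' j : 'I_d, (j < l i)%N -> (j < l i')%N -> (i < i')%N -> (ent T (i, j) < ent T (i', j))%N].
Proof.
case/andP => /andP [/forallP h1 /forallP h2] /forallP h3; split.
- by move=> c; exact: (eqP (h1 c)).
- move=> i j j' a b c; move: (h2 i) => /forallP /(_ j) /forallP /(_ j') /implyP; apply.
  by rewrite /cell /= a b c.
- move=> i i' j a b c; move: (h3 i) => /forallP /(_ i') /forallP /(_ j) /implyP; apply.
  by rewrite /cell /= a b c.
Qed.

Lemma ssytI :
  (forall c, cell l c = (T c != None)) ->
  (forall i j j' : 'I_d, (j < l i)%N -> (j' < l i)%N -> (j <= j')%N -> (ent T (i, j) <= ent T (i, j'))%N) ->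
  (forall i i' j : 'I_d, (j < l i)%N -> (j < l i')%N -> (i < i')%N -> (ent T (i, j) < ent T (i', j))%N) ->
  is_ssyt l T.
Proof.
move=> h1 h2 h3; apply/andP; split; first (apply/andP; split).
- by apply/forallP => c; apply/eqP; apply: h1.
- apply/forallP => i; apply/forallP => j; apply/forallP => j'; apply/implyP.
  by case/and3P; apply: h2.
- apply/forallP => i; apply/forallP => i'; apply/forallP => j; apply/implyP.
  by case/and3P; apply: h3.
Qed.
End Ssyt.

Section Mono.
Variables (d N : nat) (l : {ffun 'I_d -> 'I_d.+1}).
Variables (i0 i1 : 'I_N) (r0 r1 : 'I_d).
Hypotheses (hi0 : val i0 = 0%N) (hi1 : val i1 = 1%N) (hr0 : val r0 = 0%N) (hr1 : val r1 = 1%N).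
Hypothesis lpart : is_partition l.

Lemma lmono (i j : 'I_d) : (i <= j)%N -> (l j <= l i)%N.
Proof.
case/andP: lpart => /forallP /(_ i) /forallP /(_ j) /implyP h _; exact: h.
Qed.

Variable T : {ffun 'I_d * 'I_d -> option 'I_N}.
Hypothesis Tssyt : is_ssyt l T.

Let H1 := let: And3 h _ _ := ssytP Tssyt in h.
Let H2 := let: And3 _ h _ := ssytP Tssyt in h.
Let H3 := let: And3 _ _ h := ssytP Tssyt in h.

Lemma cellT (i j : 'I_d) : (j < l i)%N -> exists z, T (i, j) = Some z.
Proof.
move=> h; have := H1 (i, j); rewrite /cell /= h.
by case: (T (i, j)) => [z|] // _; exists z.
Qed.

Lemma Tcell (i j : 'I_d) z : T (i, j) = Some z -> (j < l i)%N.
Proof. by move=> h; have := H1 (i, j); rewrite /cell /= h. Qed.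

Lemma zero_row0 (i j : 'I_d) : T (i, j) = Some i0 -> i = r0.
Proof.
move=> h; apply: val_inj; rewrite hr0; apply/eqP; rewrite -leqn0; apply/negP => /negP.
rewrite -ltnNge => ipos.
have hc := Tcell h.
have hc0 : (j < l r0)%N by apply: leq_trans hc _; apply: lmono; rewrite hr0.
have hlt : (r0 < i)%N by rewrite hr0.
have := H3 hc0 hc hlt.
by rewrite /ent h hi0 ltn0.
Qed.

Lemma zero_prefix (j j' : 'I_d) : T (r0, j) = Some i0 -> (j' <= j)%N -> T (r0, j') = Some i0.
Proof.
move=> h hj; have hc := Tcell h.
have hc' : (j' < l r0)%N by apply: leq_ltn_trans hc.
have := H2 hc' hc hj; rewrite /ent h hi0.
case: (cellT hc') => z ->; rewrite leqn0 => /eqP hz.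
by congr Some; apply: val_inj => /=; rewrite hi0.
Qed.

Lemma one_prefix (j j' : 'I_d) : T (r1, j) = Some i1 -> (j' <= j)%N -> T (r1, j') = Some i1.
Proof.
move=> h hj; have hc := Tcell h.
have hc' : (j' < l r1)%N by apply: leq_ltn_trans hc.
have := H2 hc' hc hj; rewrite /ent h hi1.
case: (cellT hc') => z hz; rewrite hz => hz1.
have zn0 : z != i0.
  apply/eqP => ez; subst z; have := zero_row0 hz => /(congr1 val); by rewrite hr0 hr1.
congr Some; apply: val_inj; rewrite hi1; apply/eqP; rewrite eqn_leq hz1 /=.
by rewrite lt0n; apply: contra zn0 => /eqP e; apply/eqP/val_inj => /=; rewrite hi0.
Qed.

Definition Z' := [set j | T (r0, j) == Some i0].

Lemma card_zeros : #|[set c | T c == Some i0]| = #|Z'|.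
Proof.
have -> : [set c | T c == Some i0] = [set (r0, j) | j in Z'].
  apply/setP => [[i j]]; rewrite inE; apply/idP/imsetP.
    move=> /eqP h; have ei := zero_row0 h; subst i; exists j => //.
    by rewrite inE h.
  by case=> j'; rewrite inE => h [-> ->].
by rewrite card_imset //; move=> x y [].
Qed.

Lemma Z'_iff (j : 'I_d) : (j \in Z') = (j < #|Z'|)%N.
Proof.
apply/idP/idP.
- rewrite inE => /eqP h.
  have sub : [set j' : 'I_d | (j' < j.+1)%N] \subset Z'.
    apply/subsetP => j'; rewrite !inE ltnS => hj'.
    by rewrite (zero_prefix h hj').
  by have := subset_leq_card sub; rewrite card_ltset.
- move=> hj; case: (boolP (j \in Z')) => // nj.
  have sub : Z' \subset [set j' : 'I_d | (j' < j)%N].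
    apply/subsetP => j'; rewrite !inE => /eqP hj'; rewrite ltnNge; apply/negP => le.
    by move: nj; rewrite inE (zero_prefix hj' le) eqxx.
  have := subset_leq_card sub; rewrite card_ltset; last exact: ltnW (ltn_ord j).
  by rewrite leqNgt hj.
Qed.

Lemma ones_bound (j : 'I_d) : T (r1, j) = Some i1 -> (j < #|[set c | T c == Some i1]|)%N.
Proof.
move=> h.
have sub : [set (r1, j') | j' in [set j' : 'I_d | (j' < j.+1)%N]] \subset [set c | T c == Some i1].
  apply/subsetP => c /imsetP [j' ]; rewrite inE ltnS => hj' ->.
  by rewrite inE (one_prefix h hj').
have := subset_leq_card sub; rewrite card_imset; last by move=> x y [].
by rewrite card_ltset.
Qed.


Variables (a b : nat) (ja : 'I_d).
Hypotheses (ha : #|[set c | T c == Some i0]| = a) (hb : #|[set c | T c == Some i1]| = b)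
  (hab : (b.+2 <= a)%N) (hja : val ja = a.-1).

Lemma Tja : T (r0, ja) = Some i0.
Proof.
have : ja \in Z' by rewrite Z'_iff -card_zeros ha hja; lia.
by rewrite inE => /eqP.
Qed.

Definition T' := [ffun c => if c == (r0, ja) then Some i1 else T c].

Lemma i01 : i0 != i1.
Proof. by apply/eqP => /(congr1 val); rewrite hi0 hi1. Qed.

Lemma T'ssyt : is_ssyt l T'.
Proof.
apply: ssytI.
- move=> c; rewrite /T' ffunE; case: (c =P (r0, ja)) => [->|_]; last exact: H1.
  by rewrite H1 Tja.
- move=> i j j' hj hj' le; rewrite /ent /T' !ffunE.
  case: ((i, j) =P (r0, ja)) => [[ei ej]|ne1]; case: ((i, j') =P (r0, ja)) => [[ei' ej']|ne2].
  + by [].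
  + subst i j; case: (cellT hj') => z hz; rewrite hz.
    have jne : j' != ja by apply/eqP => e; apply: ne2; rewrite e.
    have : j' \notin Z'.
      rewrite Z'_iff -card_zeros ha -ltnNge; move: le jne; rewrite -val_eqE /= hja => h1 /eqP h2; lia.
    rewrite inE hz hi1 lt0n; apply: contra => /eqP e; apply/eqP; congr Some.
    by apply: val_inj => /=; rewrite hi0.
  + subst i j'; have := H2 hj hj' le; rewrite /ent Tja hi1 hi0 leqn0 => /eqP.
    by move=> ->.
  + exact: H2.
- move=> i i' j hi hi' lt; rewrite /ent /T' !ffunE.
  case: ((i, j) =P (r0, ja)) => [[ei ej]|ne1]; case: ((i', j) =P (r0, ja)) => [[ei' ej']|ne2].
  + by subst; rewrite ltnn in lt.
  + subst i j; have := H3 hi hi' lt; rewrite /ent Tja hi0 hi1.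
    case: (cellT hi') => z hz; rewrite hz => zpos.
    rewrite ltn_neqAle zpos andbT; apply/negP => /eqP z1.
    have ez : z = i1 by apply: val_inj => /=; rewrite hi1.
    subst z.
    case: (ltngtP i' r1) => [|gt1|e1].
    * rewrite hr1 ltnS leqn0 => /eqP i'0.
      by move: lt; rewrite hr0 i'0.
    * have hr1' : (ja < l r1)%N by apply: leq_trans hi' _; apply: lmono; apply: ltnW.
      have := H3 hr1' hi' gt1; rewrite /ent hz hi1 ltnS leqn0.
      case: (cellT hr1') => z' hz'; rewrite hz' => /eqP z'0.
      have ez' : z' = i0 by apply: val_inj => /=; rewrite hi0.
      subst z'; have := zero_row0 hz' => /(congr1 val); by rewrite hr0 hr1.
    * have ei' : i' = r1 by apply: val_inj.
      subst i'; have := ones_bound hz; rewrite hb hja; lia.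
  + by subst i' j; move: lt; rewrite hr0.
  + exact: H3.
Qed.

Lemma T'cnt (i : 'I_N) : #|[set c | T' c == Some i]| =
  if i == i0 then a.-1 else if i == i1 then b.+1 else #|[set c | T c == Some i]|.
Proof.
have n01 : (Some i1 == Some i0) = false by rewrite (inj_eq Some_inj) eq_sym (negbTE i01).
case: (i =P i0) => [->|ni0].
  have -> : [set c | T' c == Some i0] = [set c | T c == Some i0] :\ (r0, ja).
    apply/setP => c; rewrite !inE /T' ffunE.
    by case: (c =P (r0, ja)) => [->|] //=; rewrite n01.
  have := cardsD1 (r0, ja) [set c | T c == Some i0].
  rewrite ha inE Tja eqxx /=; lia.
case: (i =P i1) => [->|ni1].
  have -> : [set c | T' c == Some i1] = (r0, ja) |: [set c | T c == Some i1].
    apply/setP => c; rewrite !inE /T' ffunE.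
    by case: (c =P (r0, ja)) => [->|] //=; rewrite eqxx.
  by rewrite cardsU1 inE Tja eq_sym n01 hb.
apply: eq_card => c; rewrite !inE /T' ffunE; case: (c =P (r0, ja)) => // ->.
rewrite Tja !(inj_eq Some_inj) (eq_sym i1) (eq_sym i0).
by move/eqP/negbTE: ni1 => ->; move/eqP/negbTE: ni0 => ->.
Qed.

End Mono.

Lemma schur_mono d N (l : {ffun 'I_d -> 'I_d.+1}) (i0 i1 : 'I_N) (r0 r1 : 'I_d)
  (hi0 : val i0 = 0%N) (hi1 : val i1 = 1%N) (hr0 : val r0 = 0%N) (hr1 : val r1 = 1%N)
  (lpart : is_partition l) (f f' : nat -> nat) :
  ((f 1).+2 <= f 0)%N -> (f 0 <= d)%N -> f' 0%N = (f 0).-1 -> f' 1%N = (f 1).+1 ->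
  (forall t, t != 0%N -> t != 1%N -> f' t = f t) ->
  (#|[set T : {ffun 'I_d * 'I_d -> option 'I_N} | is_ssyt l T &
        [forall i : 'I_N, #|[set c | T c == Some i]| == f i]]|
   <= #|[set T : {ffun 'I_d * 'I_d -> option 'I_N} | is_ssyt l T &
        [forall i : 'I_N, #|[set c | T c == Some i]| == f' i]]|)%N.
Proof.
move=> hab hd h0 h1 hother.
have hjd : ((f 0).-1 < d)%N by lia.
pose ja := Ordinal hjd.
have hja : val ja = (f 0).-1 := erefl.
pose F (T : {ffun 'I_d * 'I_d -> option 'I_N}) :=
  [ffun c => if c == (r0, ja) then Some i1 else T c].
set A := [set T | _ & _]; set B := [set T | _ & _].
have infoA : forall T, T \in A -> [/\ is_ssyt l T,
    #|[set c | T c == Some i0]| = f 0, #|[set c | T c == Some i1]| = f 1 &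
    forall i : 'I_N, #|[set c | T c == Some i]| = f i].
  move=> T; rewrite inE => /andP [hT /forallP hc]; split => //.
  - by rewrite (eqP (hc i0)) hi0.
  - by rewrite (eqP (hc i1)) hi1.
  - by move=> i; rewrite (eqP (hc i)).
have inj : {in A &, injective F}.
  move=> T1 T2 /infoA [s1 a1 b1 _] /infoA [s2 a2 b2 _] eF; apply/ffunP => c.
  case: (c =P (r0, ja)) => [->|ne].
    rewrite (Tja hi0 hi1 hr0 hr1 lpart s1 a1 b1 hab hja).
    by rewrite (Tja hi0 hi1 hr0 hr1 lpart s2 a2 b2 hab hja).
  by move/ffunP: eF => /(_ c); rewrite !ffunE; move/eqP/negbTE: ne => ->.
rewrite -(card_in_imset inj); apply: subset_leq_card; apply/subsetP => _ /imsetP [T hA ->].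
have [s a b call] := infoA T hA.
rewrite inE; apply/andP; split.
  exact: (T'ssyt hi0 hi1 hr0 hr1 lpart s a b hab hja).
apply/forallP => i.
have := T'cnt hi0 hi1 hr0 hr1 lpart s a b hab hja i.
rewrite /T' -/ja -/(F T) => ->.
case: (i =P i0) => [->|ni0]; first by rewrite hi0 h0.
case: (i =P i1) => [->|ni1]; first by rewrite hi1 h1.
rewrite call hother //.
  by apply/eqP => e; apply: ni0; apply: val_inj; rewrite /= e hi0.
by apply/eqP => e; apply: ni1; apply: val_inj; rewrite /= e hi1.
Qed.

Definition kset (V : finType) (e : rel V) (f : nat -> nat) :=
  [set k : {ffun V -> 'I_#|V|} | proper_coloring e k &
       [forall i : 'I_#|V|, #|[set v | k v == i]| == f i]].

Lemma glue (V : finType) (e : rel V) (f f' : nat -> nat) :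
  (2 <= #|V|)%N -> ((f 1).+2 <= f 0)%N -> (f 0 <= #|V|)%N ->
  f' 0%N = (f 0).-1 -> f' 1%N = (f 1).+1 ->
  (forall t, t != 0%N -> t != 1%N -> f' t = f t) ->
  schur_positive e -> (#|kset e f| <= #|kset e f'|)%N.
Proof.
move=> h2 hab hd h0 h1 hoth [c [cpos ceq]].
have hA := coef_chrom e f; have hB := coef_chrom e f'.
rewrite ceq raddf_sum /= in hA; rewrite ceq raddf_sum /= in hB.
rewrite -(ler_nat rat) /kset -hA -hB.
apply: ler_sum => l lp; rewrite !mcoeffZ.
apply: ler_wpM2l; first exact: cpos.
rewrite !coef_schur ler_nat.
have h0' : (0 < #|V|)%N by lia.
have h1' : (1 < #|V|)%N by lia.
exact: (@schur_mono _ _ l (Ordinal h0') (Ordinal h1') (Ordinal h0') (Ordinal h1') erefl erefl erefl erefl lp f f' hab hd h0 h1 hoth).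
Qed.

Lemma sum_bool_cardT (I : finType) (Q : pred I) :
  (\sum_(i : I) (Q i : nat))%N = #|[set i | Q i]|.
Proof. by rewrite -sum1_card [RHS]big_mkcond /=; apply: eq_bigr => i _; rewrite inE; case: (Q i). Qed.

Lemma sum_odd b : (\sum_(0 <= t < b) (odd t : nat))%N = b./2.
Proof. elim: b => [|b IH]; first by rewrite big_geq. by rewrite big_nat_recr //= IH; lia. Qed.

Lemma sum_even b : (\sum_(0 <= t < b) (~~ odd t : nat))%N = uphalf b.
Proof. elim: b => [|b IH]; first by rewrite big_geq. by rewrite big_nat_recr //= IH; lia. Qed.

Section Graph.
Variables m n : nat.
Hypothesis hm : (3 <= m)%N.
Local Notation V := ('I_(m + n)).
Local Notation N := (#|'I_(m + n)|).
Local Notation E := (@squid_edge m n).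

Lemma cardN : N = (m + n)%N. Proof. exact: card_ord. Qed.

Definition col (k : {ffun V -> 'I_N}) (t : nat) : nat :=
  if (insub t : option V) is Some v then val (k v) else 0%N.

Lemma colE k (v : V) : col k (val v) = val (k v).
Proof. by rewrite /col valK. Qed.

Lemma cnt_sum (k : {ffun V -> 'I_N}) c : #|[set v | val (k v) == c]| = (\sum_(0 <= t < m + n) (col k t == c))%N.
Proof.
rewrite big_mkord sum_bool_cardT; apply: eq_card => v; by rewrite !inE colE.
Qed.

Lemma cnt_val (k : {ffun V -> 'I_N}) (i : 'I_N) : #|[set v | k v == i]| = #|[set v | val (k v) == val i]|.
Proof. by apply: eq_card => v; rewrite !inE -val_eqE. Qed.

Lemma properE (k : {ffun V -> 'I_N}) : proper_coloring E k -> forall u v : V, E u v -> val (k u) != val (k v).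
Proof.
move=> /forallP h u v huv; move: (h u) => /forallP /(_ v) /implyP /(_ huv).
by rewrite val_eqE.
Qed.

Lemma E1 (k : {ffun V -> 'I_N}) t : proper_coloring E k -> (t.+1 < m)%N -> col k t != col k t.+1.
Proof.
move=> pk ht.
have h1 : (t < m + n)%N by lia.
have h2 : (t.+1 < m + n)%N by lia.
have := properE pk (u := Ordinal h1) (v := Ordinal h2).
rewrite -(colE k (Ordinal h1)) -(colE k (Ordinal h2)) /=; apply.
rewrite /squid_edge /= (modn_small ht) eqxx /=.
have -> : (t < m)%N by lia.
by rewrite ht /= neq_ltn ltnSn.
Qed.

Lemma E2 (k : {ffun V -> 'I_N}) : proper_coloring E k -> col k m.-1 != col k 0.
Proof.
move=> pk.
have h1 : (m.-1 < m + n)%N by lia.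
have h2 : (0 < m + n)%N by lia.
have := properE pk (u := Ordinal h1) (v := Ordinal h2).
rewrite -(colE k (Ordinal h1)) -(colE k (Ordinal h2)) /=; apply.
rewrite /squid_edge /=.
have -> : (m.-1.+1 = m)%N by lia.
rewrite modnn eqxx /= leqnn.
have -> : (0 < m)%N by lia.
have -> : (m.-1 != 0)%N by lia.
by [].
Qed.

Lemma E3 (k : {ffun V -> 'I_N}) t : proper_coloring E k -> (m <= t < m + n)%N -> col k t != col k 0.
Proof.
move=> pk /andP [ht1 ht2].
have h2 : (0 < m + n)%N by lia.
have := properE pk (u := Ordinal ht2) (v := Ordinal h2).
rewrite -(colE k (Ordinal ht2)) -(colE k (Ordinal h2)) /=; apply.
by rewrite /squid_edge /= ht1 eqxx /= orbT.
Qed.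

Lemma indep (k : {ffun V -> 'I_N}) c a b : proper_coloring E k -> (b <= m)%N ->
  (\sum_(a <= t < b) (col k t == c) <= (b - a).+1./2)%N.
Proof.
move=> pk; move hl : (b - a)%N => L.
elim: L {-2}L (leqnn L) a hl => [|L IH] L' hL' a hl hb.
  have -> : L' = 0%N by lia.
  by rewrite big_geq //; lia.
case: (ltnP (a.+1) b) => hab; last first.
  case: (ltnP a b) => hab2; last by rewrite big_geq //.
  have -> : b = a.+1 by lia.
  rewrite big_nat1; case: (col k a == c) => /=; lia.
rewrite big_ltn; last by lia.
rewrite big_ltn; last by lia.
have hne := @E1 k a pk (leq_trans hab hb).
have h12 : ((col k a == c) + (col k a.+1 == c) <= 1)%N.
  case: eqP => [e1|] /=; last by case: (_ == _).
  by rewrite -e1 eq_sym (negbTE hne).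
have := IH (b - a.+2)%N (ltac:(lia)) a.+2 erefl hb.
lia.
Qed.


Lemma v0class (k : {ffun V -> 'I_N}) : proper_coloring E k ->
  (#|[set v | val (k v) == col k 0]| <= m./2)%N.
Proof.
move=> pk; rewrite cnt_sum.
rewrite (big_cat_nat _ (n := m)) /=; [|lia|lia].
rewrite [X in (_ + X)%N]big1_seq; last first.
  move=> t; rewrite mem_index_iota => ht.
  by rewrite (negbTE (E3 pk ht)).
rewrite addn0 big_ltn; last lia.
rewrite big_ltn; last lia.
rewrite eqxx eq_sym (negbTE (@E1 k 0 pk (ltac:(lia)))) /=.
rewrite (big_cat_nat _ (n := m.-1)) /=; [|lia|lia].
rewrite [\sum_(m.-1 <= i < m) _]big1_seq; last first.
  move=> t; rewrite mem_index_iota => ht.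
  have -> : t = m.-1 by lia.
  by rewrite (negbTE (E2 pk)).
have := @indep k (col k 0) 2 m.-1 pk (ltac:(lia)).
lia.
Qed.

Lemma v0_in (k : {ffun V -> 'I_N}) (f : nat -> nat) :
  proper_coloring E k -> (forall i : 'I_N, #|[set v | k v == i]| = f i) ->
  (0 < f (col k 0))%N /\ (f (col k 0) <= m./2)%N.
Proof.
move=> pk hf.
have h0 : (0 < m + n)%N by lia.
have e : #|[set v | val (k v) == col k 0]| = f (col k 0).
  have := hf (k (Ordinal h0)); rewrite cnt_val -(colE k (Ordinal h0)) => h; rewrite h; congr f; symmetry; exact: (colE k (Ordinal h0)).
rewrite -e; split; last exact: v0class.
by apply/card_gt0P; exists (Ordinal h0); rewrite inE -(colE k (Ordinal h0)).
Qed.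

Definition pat (p : nat -> nat) : {ffun V -> 'I_N} :=
  [ffun v => insubd (enum_rank v) (p (val v))].

Lemma col_pat p t : (t < m + n)%N -> (p t <= 2)%N -> col (pat p) t = p t.
Proof.
move=> ht hp; rewrite -[t]/(val (Ordinal ht)) colE ffunE val_insubd /=.
have hlt : (p t < N)%N by rewrite cardN; lia.
by rewrite hlt.
Qed.

Lemma pat_proper p : (forall t, p t <= 2)%N ->
  (forall t, t.+1 < m -> p t != p t.+1)%N -> p m.-1 != p 0%N ->
  (forall t, m <= t < m + n -> p t != p 0%N)%N -> proper_coloring E (pat p).
Proof.
move=> hp h1 h2 h3.
have key : forall a b, (a < m)%N -> (b < m)%N -> b = (a.+1 %% m)%N -> p a != p b.
  move=> a b ha hb ->; case: (ltnP a.+1 m) => hl.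
    by rewrite modn_small //; apply: h1.
  have -> : a = m.-1 by lia.
  have -> : (m.-1.+1 = m)%N by lia.
  by rewrite modnn.
apply/forallP => u; apply/forallP => v; apply/implyP => huv.
have pu := col_pat (ltn_ord u) (hp u); have pv := col_pat (ltn_ord v) (hp v).
rewrite !colE in pu pv.
rewrite -val_eqE pu pv.
case/or3P: huv => [/and4P [hu hv hne /orP [/eqP e|/eqP e]]|/andP [hu /eqP hv]|/andP [hv /eqP hu]].
- exact: key.
- by rewrite eq_sym; apply: key.
- by rewrite hv; apply: h3; rewrite hu ltn_ord.
- by rewrite hu eq_sym; apply: h3; rewrite hv ltn_ord.
Qed.

Lemma pat_cnt p c : (forall t, p t <= 2)%N ->
  #|[set v | val (pat p v) == c]| = (\sum_(0 <= t < m + n) (p t == c))%N.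
Proof.
move=> hp; rewrite cnt_sum; apply: eq_big_nat => t ht.
by rewrite col_pat //; case/andP: ht.
Qed.

End Graph.

Lemma sum_alt0 b c (x y : nat) :
  (\sum_(0 <= t < b) ((if odd t then x else y) == c) = (x == c) * b./2 + (y == c) * uphalf b)%N.
Proof.
elim: b => [|b IH]; first by rewrite big_geq // !muln0.
rewrite big_nat_recr // IH /=; case hb: (odd b) => /=; case: (x == c); case: (y == c) => /=; lia.
Qed.

Lemma sum_alt a b c (x y : nat) : (a <= b)%N ->
  (\sum_(a <= t < b) ((if odd t then x else y) == c) =
   (x == c) * (b./2 - a./2) + (y == c) * (uphalf b - uphalf a))%N.
Proof.
move=> hab; have := sum_alt0 b c x y; rewrite (big_cat_nat _ (n := a)) //= sum_alt0.
case: (x == c); case: (y == c) => /=; lia.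
Qed.

Lemma sum_cst a b c (x : nat) : (\sum_(a <= t < b) (x == c) = (x == c) * (b - a))%N.
Proof. by rewrite sum_nat_const_nat mulnC. Qed.

Section Q.
Variables m n : nat.
Hypothesis hm : (3 <= m)%N.

Definition q (w L t : nat) : nat :=
  if (t < m)%N then (if t == w then 2 else if (t < w)%N then (if odd t then 0 else 1)
                     else (if odd t then 1 else 0))
  else if (t < m + L)%N then 0 else 2.

Lemma q_le2 w L t : (q w L t <= 2)%N.
Proof. by rewrite /q; do !case: ifP. Qed.

Lemma q_proper w L : (w <= m)%N -> odd m = (w != m) -> (L <= n)%N -> (w == 0%N) ==> (L == n) ->
  proper_coloring (@squid_edge m n) (@pat m n (q w L)).
Proof.
move=> hw hodd hL hw0; apply: pat_proper => //.
- exact: q_le2.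
- move=> t ht; rewrite /q.
  have -> : (t < m)%N by lia.
  rewrite ht; case: (ltngtP t w) => h1; case: (ltngtP t.+1 w) => h2;
   rewrite ?eqxx ?(gtn_eqF h1) ?(ltn_eqF h1) ?(gtn_eqF h2) ?(ltn_eqF h2) /=;
   try lia; rewrite ?oddS; case: (odd t) => //=.
- rewrite /q; do !case: ifP; move=> *; lia.
- move=> t ht; rewrite /q; do !case: ifP; move=> *; lia.
Qed.


Lemma q_count w L c : (w <= m)%N -> (L <= n)%N ->
  (\sum_(0 <= t < m + n) (q w L t == c) =
   (0 == c) * (w./2 + (uphalf m - uphalf w.+1) + L) +
   (1 == c) * (uphalf w + (m./2 - w.+1./2)) +
   (2 == c) * ((w < m) + (n - L)))%N.
Proof.
move=> hw hL.
rewrite (big_cat_nat _ (n := m)) /=; [|lia|lia].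
rewrite (big_cat_nat _ (n := (m + L)%N) (m := m)) /=; [|lia|lia].
have e3 : (\sum_(m + L <= t < m + n) (q w L t == c) = (2 == c) * (n - L))%N.
  have -> : ((2 == c) * (n - L) = (2 == c) * (m + n - (m + L)))%N by congr (_ * _)%N; lia.
  rewrite -sum_cst; apply: eq_big_nat => t ht.
  rewrite /q; have -> : (t < m)%N = false by lia.
  by have -> : (t < m + L)%N = false by lia.
have e2 : (\sum_(m <= t < m + L) (q w L t == c) = (0 == c) * L)%N.
  have -> : ((0 == c) * L = (0 == c) * (m + L - m))%N by congr (_ * _)%N; lia.
  rewrite -sum_cst; apply: eq_big_nat => t ht.
  rewrite /q; have -> : (t < m)%N = false by lia.
  by have -> : (t < m + L)%N by lia.
rewrite (big_cat_nat _ (n := w)) /=; [|lia|lia].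
have e1 : (\sum_(0 <= t < w) (q w L t == c) =
    (0 == c) * (w./2 - 0./2) + (1 == c) * (uphalf w - uphalf 0))%N.
  rewrite -sum_alt //; apply: eq_big_nat => t ht.
  rewrite /q; have -> : (t < m)%N by lia.
  have -> : (t == w) = false by lia.
  by have -> : (t < w)%N by lia.
have e4 : (\sum_(w <= t < m) (q w L t == c) =
    (2 == c) * (w < m) + ((1 == c) * (m./2 - w.+1./2) + (0 == c) * (uphalf m - uphalf w.+1)))%N.
  case: (ltnP w m) => hwm.
    rewrite big_ltn // -sum_alt //; congr (_ + _)%N.
      by rewrite /q hwm eqxx /=; case: (2 == c).
    apply: eq_big_nat => t ht.
    rewrite /q; have -> : (t < m)%N by lia.
    have -> : (t == w) = false by lia.
    by have -> : (t < w)%N = false by lia.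
  have -> : w = m by lia.
  rewrite big_geq // /=.
  have -> : (m./2 - m.+1./2 = 0)%N by lia.
  have -> : (uphalf m - uphalf m.+1 = 0)%N by lia.
  by rewrite !muln0.
rewrite e1 e2 e3 e4.
move: (w./2) (uphalf m - uphalf w.+1) (uphalf w) (m./2 - w.+1./2) (w < m) => a1 a2 a3 a4 a5.
rewrite /= subn0.
case: (0 == c); case: (1 == c); case: (2 == c) => /=; lia.
Qed.

End Q.

Lemma big_shift a b (F : nat -> nat) :
  (\sum_(a <= t < a + b) F t = \sum_(j < b) F (a + j))%N.
Proof.
elim: b => [|b IH]; first by rewrite addn0 big_geq // big_ord0.
by rewrite addnS big_nat_recr /= ?IH ?big_ord_recr //=; lia.
Qed.

Section Upper.
Variables m n : nat.
Hypotheses (hm : (3 <= m)%N) (hodd : odd m) (hn : (2 <= n)%N).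
Local Notation V := ('I_(m + n)).
Local Notation N := (#|'I_(m + n)|).
Local Notation E := (@squid_edge m n).
Variable g : nat -> nat.
Hypotheses (g0 : g 0%N = (n + m./2).-1) (g1 : g 1%N = (m./2).+1) (g2 : g 2%N = 1%N)
  (g3 : forall c, (3 <= c)%N -> g c = 0%N).

Section K.
Variable k : {ffun V -> 'I_N}.
Hypothesis kin : k \in kset E g.

Let pk : proper_coloring E k.
Proof. by move: kin; rewrite inE => /andP []. Qed.

Let hf : forall i : 'I_N, #|[set v | k v == i]| = g i.
Proof. by move: kin; rewrite inE => /andP [_ /forallP h] i; apply/eqP. Qed.

Lemma gpos t : (t < m + n)%N -> (0 < g (col k t))%N.
Proof.
move=> ht; have e := hf (k (Ordinal ht)); rewrite cnt_val in e.
rewrite -[t]/(val (Ordinal ht)) colE -e.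
by apply/card_gt0P; exists (Ordinal ht); rewrite inE.
Qed.

Lemma col_le2 t : (t < m + n)%N -> (col k t <= 2)%N.
Proof.
move=> ht; have := gpos ht; case: (leqP (col k t) 2) => // h.
by rewrite g3.
Qed.

Lemma col0 : col k 0 = 2%N.
Proof.
have [h1 h2] := v0_in hm pk hf.
have := col_le2 (ltac:(lia) : (0 < m + n)%N).
move: h1 h2; case: (col k 0) => [|[|[|c]]] //=; rewrite ?g0 ?g1; lia.
Qed.

Lemma colnot2 t : (0 < t < m + n)%N -> col k t != 2%N.
Proof.
case/andP => ht0 ht; apply/eqP => e.
have h0 : (0 < m + n)%N by lia.
have i2lt : (2 < N)%N by rewrite cardN; lia.
have := hf (Ordinal i2lt); rewrite cnt_val /= g2.
have sub : [set Ordinal h0; Ordinal ht] \subset [set v | val (k v) == 2%N].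
  apply/subsetP => v; rewrite !inE => /orP [] /eqP ->.
    by rewrite -(colE k (Ordinal h0)) /= col0.
  by rewrite -(colE k (Ordinal ht)) /= e.
have := subset_leq_card sub; rewrite cards2.
have -> : (Ordinal h0 != Ordinal ht) by rewrite -val_eqE /=; lia.
move=> /= h; lia.
Qed.

Lemma col01 t : (0 < t < m + n)%N -> (col k t <= 1)%N.
Proof.
move=> ht; have := col_le2 (ltac:(lia) : (t < m + n)%N); have := colnot2 ht; lia.
Qed.

Lemma path_alt t : (1 <= t < m)%N -> col k t = if odd t then col k 1 else (1 - col k 1)%N.
Proof.
move=> /andP [h1 h2]; elim: t h1 h2 => [|t IH] h1 h2 //.
case: (posnP t) => [->|tpos] //=.
have := IH (ltac:(lia)) (ltac:(lia)).
have := @E1 m n hm k t pk (ltac:(lia)).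
have := col01 (ltac:(lia) : (0 < t < m + n)%N).
have := col01 (ltac:(lia) : (0 < t.+1 < m + n)%N).
have := col01 (ltac:(lia) : (0 < 1 < m + n)%N).
case: (odd t) => /=; lia.
Qed.

Lemma leaves_one : (\sum_(m <= t < m + n) (col k t == 1%N) = 1)%N.
Proof.
have i1lt : (1 < N)%N by rewrite cardN; lia.
have := hf (Ordinal i1lt); rewrite cnt_val /= g1 cnt_sum.
rewrite (big_cat_nat _ (n := m)) /=; [|lia|lia].
rewrite big_ltn; last lia.
rewrite col0 /=.
have -> : (\sum_(1 <= i < m) (col k i == 1%N) =
           \sum_(1 <= i < m) ((if odd i then col k 1 else (1 - col k 1)%N) == 1%N))%N.
  by apply: eq_big_nat => t ht; rewrite path_alt.
rewrite sum_alt; last lia.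
have := col01 (ltac:(lia) : (0 < 1 < m + n)%N).
case: (col k 1) => [|[|c]] //= _; lia.
Qed.

Lemma leafset : exists j0 : 'I_n, [set j : 'I_n | col k (m + j) == 1%N] = [set j0].
Proof.
apply/cards1P; rewrite -sum_bool_cardT.
by have := leaves_one; rewrite big_shift => ->.
Qed.

End K.

Lemma upper_bound : (#|kset E g| <= 2 * n)%N.
Proof.
have n0 : (0 < n)%N by lia.
pose j0 := Ordinal n0.
pose F (c : {ffun V -> 'I_N}) := (col c 1 == 0%N, odflt j0 [pick j : 'I_n | col c (m + j) == 1%N]).
have pickE : forall c, c \in kset E g -> forall j : 'I_n,
    (col c (m + j) == 1%N) = (j == (F c).2).
  move=> c hc j; have [js hs] := leafset hc.
  have hjs : forall j' : 'I_n, (col c (m + j') == 1%N) = (j' == js).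
    by move=> j'; move/setP: hs => /(_ j'); rewrite !inE.
  rewrite hjs /F /=; case: pickP => [y hy|hn0] /=.
    by rewrite hjs in hy; rewrite (eqP hy).
  by move: (hn0 js); rewrite hjs eqxx.
have inj : {in kset E g &, injective F}.
  move=> c1 c2 h1 h2 eF; apply/ffunP => v; apply: val_inj; rewrite -!colE.
  have ht : (val v < m + n)%N by exact: ltn_ord v.
  case: (posnP (val v)) => [->|vpos]; first by rewrite !col0.
  case: (ltnP (val v) m) => vm.
    have hv : (1 <= val v < m)%N by lia.
    rewrite (path_alt h1 hv) (path_alt h2 hv).
    have e1 : col c1 1 = col c2 1.
      have := col01 h1 (ltac:(lia) : (0 < 1 < m + n)%N).
      have := col01 h2 (ltac:(lia) : (0 < 1 < m + n)%N).
      move: (congr1 fst eF) => /=.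
      case: (col c1 1) => [|[|?]]; case: (col c2 1) => [|[|?]] //=.
    by rewrite e1.
  have hj : (val v - m < n)%N by lia.
  have -> : val v = (m + Ordinal hj)%N by rewrite /=; apply/esym/subnKC; exact: vm.
  have := pickE _ h1 (Ordinal hj); have := pickE _ h2 (Ordinal hj).
  rewrite eF => <-.
  have hjj : (0 < m + Ordinal hj < m + n)%N by rewrite ltn_add2l ltn_ord andbT; lia.
  have := col01 h1 hjj; have := col01 h2 hjj.
  case: (col c1 _) => [|[|?]]; case: (col c2 _) => [|[|?]] //=.
rewrite -(card_in_imset inj); apply: leq_trans (max_card _) _.
by rewrite card_prod card_bool card_ord.
Qed.

End Upper.

Section Main.
Variables m n : nat.
Hypotheses (hm : (3 <= m)%N) (hn : (2 <= n)%N).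
Local Notation V := ('I_(m + n)).
Local Notation N := (#|'I_(m + n)|).
Local Notation E := (@squid_edge m n).

Lemma kset0 f : (forall c, f c = 0%N \/ (m./2 < f c)%N) -> #|kset E f| = 0%N.
Proof.
move=> hf; case: (set_0Vmem (kset E f)) => [->|[c hc]]; first by rewrite cards0.
exfalso.
have pk : proper_coloring E c by move: hc; rewrite inE => /andP [].
have hc' : forall i : 'I_N, #|[set v | c v == i]| = f i.
  by move: hc; rewrite inE => /andP [_ /forallP h] i; apply/eqP.
have [h1 h2] := v0_in hm pk hc'.
by case: (hf (col c 0)); lia.
Qed.

Lemma pat_in w L f : (w <= m)%N -> odd m = (w != m) -> (L <= n)%N -> (w == 0%N) ==> (L == n) ->
  (forall c, ((0 == c) * (w./2 + (uphalf m - uphalf w.+1) + L) +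
   (1 == c) * (uphalf w + (m./2 - w.+1./2)) +
   (2 == c) * ((w < m) + (n - L)))%N = f c) ->
  @pat m n (q m w L) \in kset E f.
Proof.
move=> h1 h2 h3 h4 hf; have qp := q_proper hm h1 h2 h3 h4; rewrite inE qp /=.
apply/forallP => i; rewrite cnt_val (pat_cnt n hm); last exact: q_le2.
by rewrite (q_count hm) // hf.
Qed.


Lemma caseA : ~~ odd m -> ~ schur_positive E.
Proof.
move=> hodd sp.
pose f t := if t == 0%N then (n + m./2)%N else if t == 1%N then m./2 else 0%N.
pose f' t := if t == 0%N then (n + m./2).-1 else if t == 1%N then (m./2).+1 else 0%N.
have hV : #|V| = (m + n)%N := card_ord _.
have h2 : (2 <= #|V|)%N by rewrite hV; lia.
have hd : (f 0%N <= #|V|)%N by rewrite hV /f /=; lia.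
have hab : ((f 1%N).+2 <= f 0%N)%N by rewrite /f /=; lia.
have hoth : forall t, t != 0%N -> t != 1%N -> f' t = f t.
  by move=> t /negbTE h0 /negbTE h1; rewrite /f /f' h0 h1.
have := @glue V E f f' h2 hab hd erefl erefl hoth sp.
rewrite (@kset0 f'); last first.
  move=> c; rewrite /f'; case: ifP => _; first by right; lia.
  case: ifP => _; first by right; lia.
  by left.
have : (0 < #|kset E f|)%N.
  apply/card_gt0P; eexists; apply: (@pat_in m n f).
  - exact: leqnn.
  - by rewrite eqxx; apply/negbTE.
  - exact: leqnn.
  - by have -> : (m == 0%N) = false by lia.
  move=> c; rewrite /f; case: c => [|[|[|c]]] /=; lia.
by move=> p1 p2; have := leq_trans p1 p2.
Qed.

Lemma caseB : odd m -> (m./2 + 2 <= n)%N -> ~ schur_positive E.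
Proof.
move=> hodd hnk sp.
pose f t := if t == 0%N then (m./2).+2 else if t == 1%N then m./2
            else if t == 2%N then n.-1 else 0%N.
pose f' t := if t == 0%N then (m./2).+1 else if t == 1%N then (m./2).+1
            else if t == 2%N then n.-1 else 0%N.
have hV : #|V| = (m + n)%N := card_ord _.
have h2 : (2 <= #|V|)%N by rewrite hV; lia.
have hd : (f 0%N <= #|V|)%N by rewrite hV /f /=; lia.
have hab : ((f 1%N).+2 <= f 0%N)%N by rewrite /f /=; lia.
have hoth : forall t, t != 0%N -> t != 1%N -> f' t = f t.
  by move=> t /negbTE h0 /negbTE h1; rewrite /f /f' h0 h1.
have := @glue V E f f' h2 hab hd erefl erefl hoth sp.
rewrite (@kset0 f'); last first.
  move=> c; rewrite /f'; case: ifP => _; first by right; lia.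
  case: ifP => _; first by right; lia.
  case: ifP => _; first by right; lia.
  by left.
have : (0 < #|kset E f|)%N.
  apply/card_gt0P; eexists; apply: (@pat_in m.-1 2 f).
  - lia.
  - by rewrite hodd; apply/esym; apply/eqP; lia.
  - lia.
  - by have -> : (m.-1 == 0%N) = false by lia.
  move=> c; rewrite /f; case: c => [|[|[|c]]] /=; lia.
by move=> p1 p2; have := leq_trans p1 p2.
Qed.

Lemma caseC : odd m -> (n <= m./2)%N -> ~ schur_positive E.
Proof.
move=> hodd hnk sp.
pose f t := if t == 0%N then (n + m./2)%N else if t == 1%N then m./2
            else if t == 2%N then 1%N else 0%N.
pose f' t := if t == 0%N then (n + m./2).-1 else if t == 1%N then (m./2).+1
            else if t == 2%N then 1%N else 0%N.
have hV : #|V| = (m + n)%N := card_ord _.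
have h2 : (2 <= #|V|)%N by rewrite hV; lia.
have hd : (f 0%N <= #|V|)%N by rewrite hV /f /=; lia.
have hab : ((f 1%N).+2 <= f 0%N)%N by rewrite /f /=; lia.
have hoth : forall t, t != 0%N -> t != 1%N -> f' t = f t.
  by move=> t /negbTE h0 /negbTE h1; rewrite /f /f' h0 h1.
have hle := @glue V E f f' h2 hab hd erefl erefl hoth sp.
have hub : (#|kset E f'| <= 2 * n)%N.
  apply: (@upper_bound m n hm hodd hn f') => //.
  by move=> c hc; rewrite /f'; case: c hc => [|[|[|c]]].
have hlb : (m <= #|kset E f|)%N.
  have inj : injective (fun w : 'I_m => @pat m n (q m w n)).
    move=> w1 w2 e; apply: val_inj => /=.
    have hw1 : (val w1 < m + n)%N by exact: ltn_addr _ (ltn_ord w1).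
    have := @col_pat m n hm (q m w1 n) (val w1) hw1 (q_le2 _ _ _ _).
    have := @col_pat m n hm (q m w2 n) (val w1) hw1 (q_le2 _ _ _ _).
    rewrite -e => ->.
    rewrite /q ltn_ord eqxx.
    case: eqP => // _; do !case: ifP => _ //.
  have c1 := card_imset [set: 'I_m] inj; rewrite cardsT (card_ord m) in c1.
  have sub : [set @pat m n (q m w n) | w : 'I_m in [set: 'I_m]] \subset kset E f.
  apply/subsetP => _ /imsetP [w _ ->].
  apply: (@pat_in w n f).
  - exact: ltnW (ltn_ord w).
  - by rewrite hodd; apply/esym; apply/eqP => e; have := ltn_ord w; rewrite e ltnn.
  - exact: leqnn.
  - by rewrite eqxx implybT.
  have := ltn_ord w.
  move=> hw c; rewrite /f; case: c => [|[|[|c]]] /=; lia.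
  have c2 := subset_leq_card sub.
  by rewrite c1 in c2.
have := leq_trans hlb (leq_trans hle hub); lia.
Qed.

End Main.
Unset Implicit Arguments.

Theorem theorem3p8 (m n : nat) :
  (3 <= m)%N -> (2 <= n)%N -> m <> (2 * n - 1)%N ->
  ~ schur_positive (@squid_edge m n).
Proof.
move=> hm hn hne.
case: (boolP (odd m)) => hodd; last exact: caseA.
case: (leqP n m./2) => hnk; first exact: caseC.
apply: caseB => //.
case: (leqP (m./2 + 2) n) => // h.
exfalso; apply: hne; lia.
Qed.
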